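(* Let $G$ be a connected threshold graph of order $n \ge 4$ and size $m$ with $n-1 < m < \binom{n}{2}$, with generating sequence $a_1a_2\cdots a_n$, $c$ type 1 vertices, $z$ type 0 vertices, backwards zero position sequence $(b_1,\ldots,b_z)$, and numbers $F_p$ ($p\in\mathbb{N}_0$) and $\mathrm{LW}_k$ ($k \in \mathbb{N}_0$) as defined in the context. Then the sequence $(\mathrm{LW}_k)_{k\in\mathbb{N}_0}$ satisfies \[ \mathrm{LW}_0 = 1, \qquad \mathrm{LW}_k = c\,\mathrm{LW}_{k-1} + \sum_{r=0}^{k-3} \mathrm{LW}_r \sum_{q\in\mathbb{N}_0} \binom{k-3-r-q}{q} F_{q+1} \qquad (k\in\mathbb{N}). \]
   Context: A threshold graph is a simple graph whose vertices can be ordered $v_1,\ldots,v_n$ so that for each $2\le i\le n$, $v_i$ is either adjacent to all of $v_1,\ldots,v_{i-1}$ (then $a_i=1$) or to none of them (then $a_i=0$); $a_1a_2\cdots a_n$ is the generating sequence, where by convention $a_1=1$. Vertex $v_i$ is of type 1 if $a_i=1$ and of type 0 if $a_i=0$; $c$ and $z$ denote the numbers of type 1 and type 0 vertices, so $c+z=n$ (here $c\ge 3$, $z \ge 1$). The backwards zero position sequence $(b_1,\ldots,b_z)$ is defined by letting $b_i$ be the number of type 1 vertices appearing after the $i$-th type 0 vertex in the order $v_1,\ldots,v_n$. A lazy walk of length $k\in\mathbb{N}_0$ is a sequence $u_0u_1\cdots u_k$ of vertices such that for each $1\le i\le k$, $u_i=u_{i-1}$ or $u_i$ is adjacent to $u_{i-1}$.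 For $k\in\mathbb{N}$, $\mathrm{LW}_k$ is the number of lazy walks of length $k-1$ in $G$ whose first and last vertices are both type 1 vertices, and $\mathrm{LW}_0=1$. Define $F_0=c$ and, for $p\ge 1$, \[F_p=\sum_{i_1,\ldots,i_p=1}^{z} b_{i_1}\min\{b_{i_1},b_{i_2}\}\min\{b_{i_2},b_{i_3}\}\cdots\min\{b_{i_{p-1}},b_{i_p}\}\,b_{i_p}\] (so $F_1=\sum_{i=1}^z b_i^2$). Binomial coefficients $\binom{a}{q}$ with integer $a$ and $q\in\mathbb{N}_0$ are taken to be $0$ whenever $a<q$. *)

(* Defs.v *)
From mathcomp Require Import all_boot all_order.
Set Implicit Arguments. Unset Strict Implicit. Unset Printing Implicit Defensive.

(* A threshold graph of order n is given by its generating sequence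
   a_1 ... a_n, encoded as a : 'I_n -> bool (vertex v_{i+1} is the ordinal i).
   The value a at index 0 is ignored: by convention a_1 = 1. *)

Definition type1 (n : nat) (a : 'I_n -> bool) (i : 'I_n) : bool :=
  (val i == 0) || a i.

Definition tadj (n : nat) (a : 'I_n -> bool) : rel 'I_n :=
  fun i j => (i != j) && (if (val i < val j)%N then a j else a i).

Definition tconnected (n : nat) (a : 'I_n -> bool) : Prop :=
  forall i j : 'I_n, connect (tadj a) i j.

Definition thr_size (n : nat) (a : 'I_n -> bool) : nat :=
  #|[set p : 'I_n * 'I_n | (val p.1 < val p.2)%N && tadj a p.1 p.2]|.

Definition thr_c (n : nat) (a : 'I_n -> bool) : nat := #|[set i | type1 a i]|.

Definition bseq (n : nat) (a : 'I_n -> bool) : seq nat :=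
  [seq #|[set j | type1 a j & (val i < val j)%N]| | i <- enum 'I_n & ~~ type1 a i].

Definition thr_z (n : nat) (a : 'I_n -> bool) : nat := size (bseq a).

Definition thr_F (n : nat) (a : 'I_n -> bool) (p : nat) : nat :=
  match p with
  | 0 => thr_c a
  | p'.+1 =>
      let b := bseq a in
      \sum_(t : {ffun 'I_p'.+1 -> 'I_(thr_z a)})
        nth 0 b (t ord0)
        * (\prod_(k < p') minn (nth 0 b (t (inord k))) (nth 0 b (t (inord k.+1))))
        * nth 0 b (t ord_max)
  end.

(* lazy walks u_0 ... u_{L} encoded as w : {ffun 'I_L.+1 -> 'I_n} *)
Definition lazy_walk (n L : nat) (a : 'I_n -> bool) (w : {ffun 'I_L.+1 -> 'I_n}) : bool :=
  [forall i : 'I_L, (w (inord i.+1) == w (inord i)) || tadj a (w (inord i)) (w (inord i.+1))].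

Definition LW (n : nat) (a : 'I_n -> bool) (k : nat) : nat :=
  match k with
  | 0 => 1
  | L.+1 => #|[set w : {ffun 'I_L.+1 -> 'I_n} |
                 [&& lazy_walk a w, type1 a (w ord0) & type1 a (w ord_max)]]|
  end.

(* Main.v *)
Require Import Defs.
From mathcomp Require Import all_boot all_order.
From mathcomp Require Import zify.
Set Implicit Arguments. Unset Strict Implicit. Unset Printing Implicit Defensive.
Fixpoint chain (T : finType) (g : T -> T -> nat) (L : nat) (h : T -> nat) : T -> nat :=
  match L with
  | 0 => h
  | L'.+1 => fun u => \sum_v g u v * chain g L' h v
  end.

Definition fcons (T : finType) L (x : T) (w : {ffun 'I_L.+1 -> T}) : {ffun 'I_L.+2 -> T} :=
  [ffun i : 'I_L.+2 => if val i is j.+1 then w (inord j) else x].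

Lemma val_inord n m : m < n.+1 -> val (@inord n m) = m.
Proof. exact: inordK. Qed.

Lemma sum_fcons (T : finType) L (F : {ffun 'I_L.+2 -> T} -> nat) :
  \sum_(w : {ffun 'I_L.+2 -> T}) F w =
  \sum_(x : T) \sum_(w : {ffun 'I_L.+1 -> T}) F (fcons x w).
Proof.
rewrite (pair_bigA _ (fun x w => F (fcons x w))) /=.
rewrite (reindex (fun p : T * {ffun 'I_L.+1 -> T} => fcons p.1 p.2)) //=.
exists (fun w : {ffun 'I_L.+2 -> T} => (w ord0, [ffun j : 'I_L.+1 => w (inord j.+1)])).
  move=> [x w] _ /=; congr pair; first by rewrite ffunE.
  apply/ffunP=> j; rewrite !ffunE val_inord; last by rewrite ltnS.
  by congr (w _); apply/val_inj; rewrite /= inordK.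
move=> w _; apply/ffunP=> i; rewrite !ffunE.
case: i => [[|j] Hj] /=; first by congr (w _); apply/val_inj.
rewrite ffunE; congr (w _); apply/val_inj; rewrite /= !inordK //.
Qed.

Lemma chain_sum (T : finType) (g : T -> T -> nat) (h : T -> nat) L :
  forall f : T -> nat,
  \sum_(w : {ffun 'I_L.+1 -> T}) f (w ord0) *
     (\prod_(i < L) g (w (inord i)) (w (inord i.+1))) * h (w ord_max)
  = \sum_u f u * chain g L h u.
Proof.
elim: L => [|L IH] f.
  rewrite (reindex (fun u : T => [ffun _ : 'I_1 => u])) /=.
    by apply: eq_bigr => u _; rewrite big_ord0 muln1 !ffunE.
  exists (fun w : {ffun 'I_1 -> T} => w ord0) => [u _|w _]; first by rewrite ffunE.
  by apply/ffunP => i; rewrite ffunE ord1.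
rewrite sum_fcons; apply: eq_bigr => x _.
rewrite /= -IH big_distrr /=; apply: eq_bigr => w _.
rewrite big_ord_recl !ffunE /=.
have e0 : (inord 0 : 'I_L.+2) = ord0 by apply/val_inj; rewrite /= inordK.
rewrite e0 /=.
have -> : (nat_of_ord (@inord L.+1 1)) = 1 by rewrite inordK.
have -> : (@inord L 0) = ord0 by apply/val_inj; rewrite /= inordK.
have -> : (@inord L L) = ord_max by apply/val_inj; rewrite /= inordK.
have -> : \prod_(i < L) g ((fcons x w) (inord (bump 0 i))) ((fcons x w) (inord (bump 0 i).+1))
   = \prod_(i < L) g (w (inord i)) (w (inord i.+1)).
  apply: eq_bigr => i _; rewrite !ffunE /bump /= !val_inord //; have := ltn_ord i; lia.
by rewrite !mulnA.
Qed.
Lemma prod_forall (I : finType) (P : pred I) :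
  \prod_(i : I) (P i : nat) = [forall i, P i].
Proof.
case: (boolP [forall i, P i]) => [/forallP H | /forallPn [i Hi]].
  by rewrite big1 // => i _; rewrite H.
by rewrite (bigD1 i) //= (negbTE Hi).
Qed.

Definition stp n (a : 'I_n -> bool) (u v : 'I_n) : nat := (v == u) || tadj a u v.
Definition Nm n (a : 'I_n -> bool) (u v : 'I_n) : nat :=
  ((v == u) || tadj a u v) && ~~ (type1 a u && type1 a v).
Definition Kn n (a : 'I_n -> bool) (u : 'I_n) : nat := type1 a u.

Lemma LW_chain n (a : 'I_n -> bool) L :
  LW a L.+1 = \sum_u Kn a u * chain (stp a) L (Kn a) u.
Proof.
rewrite /LW cardsE -sum1_card big_mkcond /= -chain_sum.
apply: eq_bigr => w _.
have HP : \prod_(i < L) stp a (w (inord i)) (w (inord i.+1)) = lazy_walk a w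
  := prod_forall _.
rewrite HP /Kn.
rewrite unfold_in /=.
by case: (type1 a (w ord0)); case: (type1 a (w ord_max)); case: (lazy_walk a w).
Qed.

Lemma tadjC n (a : 'I_n -> bool) u v : tadj a u v = tadj a v u.
Proof.
rewrite /tadj eq_sym; case: (ltngtP (val u) (val v)) => h //.
by have -> : u = v by apply/val_inj.
Qed.

Lemma stpKK n (a : 'I_n -> bool) u v :
  type1 a u -> type1 a v -> stp a u v = 1.
Proof.
rewrite /stp /type1 => Hu Hv; case: (eqVneq v u) => //= huv.
rewrite /tadj eq_sym huv /=; case: (ltngtP (val u) (val v)) => h.
- by move: Hv; case: (a v) => //; rewrite orbF => /eqP; lia.
- by move: Hu; case: (a u) => //; rewrite orbF => /eqP; lia.
- have e : u = v by apply/val_inj.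
  by rewrite e eqxx in huv.
Qed.

Lemma stp_split n (a : 'I_n -> bool) u v : stp a u v = Nm a u v + Kn a u * Kn a v.
Proof.
rewrite /Nm /Kn; case Ku: (type1 a u); case Kv: (type1 a v) => /=;
  rewrite ?muln0 ?addn0 ?andbT //.
by rewrite stpKK // andbF.
Qed.

Lemma tadj_ZK n (a : 'I_n -> bool) z w :
  ~~ type1 a z -> type1 a w -> tadj a z w = (val z < val w).
Proof.
rewrite /type1 negb_or => /andP[z0 az] Kw; rewrite /tadj.
case: (ltngtP (val z) (val w)) => h.
- have -> : z != w by apply/eqP => e; move: h; rewrite e ltnn.
  by move: Kw; case: (a w) => //; rewrite orbF => /eqP; lia.
- by rewrite (negbTE az) andbF.
- have e : w = z by apply/val_inj.
  by rewrite e (negbTE az) orbF (negbTE z0) in Kw.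
Qed.

Lemma tadj_ZZ n (a : 'I_n -> bool) z w :
  ~~ type1 a z -> ~~ type1 a w -> tadj a z w = false.
Proof.
rewrite /type1 !negb_or => /andP[z0 az] /andP[w0 aw]; rewrite /tadj.
by case: ifP => _; rewrite ?(negbTE az) ?(negbTE aw) andbF.
Qed.

Lemma NmK n (a : 'I_n -> bool) u v :
  type1 a u -> Nm a u v = (~~ type1 a v) * tadj a u v.
Proof.
rewrite /Nm => Ku; rewrite Ku /=; case Kv: (type1 a v) => /=; first by rewrite andbF.
rewrite andbT mul1n.
have -> : (v == u) = false by apply/eqP => e; rewrite e Ku in Kv.
by [].
Qed.

Lemma NmZ n (a : 'I_n -> bool) u v :
  ~~ type1 a u -> Nm a u v = (v == u) + Kn a v * tadj a u v.
Proof.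
rewrite /Nm /Kn => Zu; rewrite (negbTE Zu) /= andbT; case Kv: (type1 a v) => /=.
  have -> : (v == u) = false by apply/eqP => e; rewrite -e Kv in Zu.
  by case: (tadj a u v).
by rewrite tadj_ZZ ?Kv // orbF mul0n addn0.
Qed.

Lemma chainN_K n (a : 'I_n -> bool) h m u : type1 a u ->
  chain (Nm a) m.+1 h u = \sum_v ((~~ type1 a v) * tadj a u v) * chain (Nm a) m h v.
Proof. by move=> Ku /=; apply: eq_bigr => v _; rewrite NmK. Qed.

Lemma chainN_Z n (a : 'I_n -> bool) h m u : ~~ type1 a u ->
  chain (Nm a) m.+1 h u = chain (Nm a) m h u
     + \sum_v (Kn a v * tadj a u v) * chain (Nm a) m h v.
Proof.
move=> Zu /=; under eq_bigr do rewrite NmZ // mulnDl.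
rewrite big_split /=; congr (_ + _).
by rewrite (bigD1 u) //= eqxx mul1n big1 ?addn0 // => v /negbTE ->.
Qed.

Lemma chainMN n (a : 'I_n -> bool) h m u :
  chain (stp a) m h u = chain (Nm a) m h u
   + \sum_(i < m) (\sum_w Kn a w * chain (stp a) i h w) * chain (Nm a) (m - i.+1) (Kn a) u.
Proof.
elim: m u => [|m IH] u; first by rewrite big_ord0 addn0.
transitivity (\sum_v Nm a u v * chain (stp a) m h v
    + Kn a u * \sum_v Kn a v * chain (stp a) m h v).
  rewrite /= big_distrr -big_split /=; apply: eq_bigr => v _.
  by rewrite stp_split mulnDl mulnA.
under eq_bigr do rewrite IH mulnDr.
rewrite big_split /= -addnA; congr (_ + _).
rewrite big_ord_recr /= subnn mulnC; congr (_ + _).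
under eq_bigr do rewrite big_distrr /=.
rewrite exchange_big /=; apply: eq_bigr => i _.
have -> : m.+1 - i.+1 = (m - i.+1).+1 by have := ltn_ord i; lia.
rewrite /= big_distrr /=; apply: eq_bigr => v _.
by rewrite mulnCA.
Qed.

Definition nb n (a : 'I_n -> bool) (z : 'I_n) : nat := \sum_v Kn a v * tadj a z v.
Definition cn n (a : 'I_n -> bool) (z z' : 'I_n) : nat :=
  \sum_v Kn a v * tadj a z v * tadj a v z'.
Definition Gv n (a : 'I_n -> bool) (z z' : 'I_n) : nat := (~~ type1 a z') * cn a z z'.
Definition E n (a : 'I_n -> bool) (j : nat) : nat :=
  \sum_u Kn a u * chain (Nm a) j (Kn a) u.

Lemma E_S n (a : 'I_n -> bool) j :
  E a j.+1 = \sum_v ((~~ type1 a v) * nb a v) * chain (Nm a) j (Kn a) v.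
Proof.
transitivity (\sum_u Kn a u * \sum_v ((~~ type1 a v) * tadj a u v) * chain (Nm a) j (Kn a) v).
  apply: eq_bigr => u _; rewrite /Kn; case Ku: (type1 a u) => //.
  by rewrite chainN_K ?Ku.
under eq_bigr do rewrite big_distrr /=.
rewrite exchange_big /=; apply: eq_bigr => v _.
rewrite /nb big_distrr /= big_distrl /=; apply: eq_bigr => u _.
rewrite (tadjC a v u); lia.
Qed.

Lemma E_1 n (a : 'I_n -> bool) : E a 1 = 0.
Proof.
rewrite E_S big1 // => v _ /=; rewrite /Kn; case: (type1 a v) => /=; lia.
Qed.

Lemma E_0 n (a : 'I_n -> bool) : E a 0 = thr_c a.
Proof.
rewrite /E /thr_c cardsE -sum1_card [RHS]big_mkcond /=; apply: eq_bigr => u _.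
by rewrite unfold_in /Kn /type1 /=; case: (_ || _).
Qed.

Lemma y0 n (a : 'I_n -> bool) z : ~~ type1 a z -> chain (Nm a) 0 (Kn a) z = 0.
Proof. by rewrite /= /Kn => /negbTE ->. Qed.

Lemma y1 n (a : 'I_n -> bool) z : ~~ type1 a z -> chain (Nm a) 1 (Kn a) z = nb a z.
Proof.
move=> Zz; rewrite chainN_Z // y0 // add0n /nb; apply: eq_bigr => v _ /=.
by rewrite /Kn; case: (type1 a v) => /=; lia.
Qed.

Lemma yrec n (a : 'I_n -> bool) m z : ~~ type1 a z ->
  chain (Nm a) m.+2 (Kn a) z = chain (Nm a) m.+1 (Kn a) z
     + \sum_z' Gv a z z' * chain (Nm a) m (Kn a) z'.
Proof.
move=> Zz; rewrite chainN_Z //; congr (_ + _).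
transitivity (\sum_v (Kn a v * tadj a z v) *
   \sum_z' ((~~ type1 a z') * tadj a v z') * chain (Nm a) m (Kn a) z').
  apply: eq_bigr => v _; rewrite /Kn; case Kv: (type1 a v) => //.
  by rewrite chainN_K ?Kv.
under eq_bigr do rewrite big_distrr /=.
rewrite exchange_big /=; apply: eq_bigr => z' _.
rewrite /Gv /cn big_distrr /= big_distrl /=; apply: eq_bigr => v _.
lia.
Qed.

Lemma binrec m (c : nat -> nat) :
  \sum_(q < m.+3) 'C(m.+2 - q, q) * c q =
  \sum_(q < m.+2) 'C(m.+1 - q, q) * c q + \sum_(q < m.+1) 'C(m - q, q) * c q.+1.
Proof.
rewrite big_ord_recl [in X in _ = X + _]big_ord_recl /= !subn0 !bin0 -addnA.
congr (_ + _).
rewrite big_ord_recr /bump /= !add1n subnn bin0n /= mul0n addn0 -big_split /=.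
apply: eq_bigr => i _; rewrite !add1n !subSS.
have hi := ltn_ord i.
rewrite (subSn (m := i) (n := m)); last by lia.
by rewrite binS mulnDl.
Qed.

Lemma yclosed n (a : 'I_n -> bool) m z : ~~ type1 a z ->
  chain (Nm a) m.+1 (Kn a) z = \sum_(q < m.+1) 'C(m - q, q) * chain (Gv a) q (nb a) z.
Proof.
move: z; suff H : forall m, (forall z, ~~ type1 a z ->
   chain (Nm a) m.+1 (Kn a) z = \sum_(q < m.+1) 'C(m - q, q) * chain (Gv a) q (nb a) z) /\
   (forall z, ~~ type1 a z ->
   chain (Nm a) m.+2 (Kn a) z = \sum_(q < m.+2) 'C(m.+1 - q, q) * chain (Gv a) q (nb a) z).
  by case: (H m).
elim=> [|k [IH1 IH2]].
  split=> z Zz.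
    by rewrite y1 // big_ord1 bin0 mul1n.
  rewrite yrec // y1 // big1 ?addn0; last first.
    by move=> v _; rewrite /Gv /= /Kn; case: (type1 a v) => /=; lia.
  by rewrite !big_ord_recr big_ord0 /= add0n bin0 mul1n subnn bin0n mul0n addn0.
split=> //.
move=> z Zz; rewrite yrec // IH2 //.
transitivity (\sum_(q < k.+2) 'C(k.+1 - q, q) * chain (Gv a) q (nb a) z +
   \sum_(q < k.+1) 'C(k - q, q) * chain (Gv a) q.+1 (nb a) z); last by rewrite (binrec k (fun q => chain (Gv a) q (nb a) z)).
congr (_ + _).
transitivity (\sum_z' Gv a z z' * \sum_(q < k.+1) 'C(k - q, q) * chain (Gv a) q (nb a) z').
  apply: eq_bigr => z' _; rewrite /Gv; case Kz': (type1 a z'); first by rewrite /= !mul0n.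
  by rewrite IH1 ?Kz'.
under eq_bigr do rewrite big_distrr /=.
rewrite exchange_big /=; apply: eq_bigr => q _.
rewrite big_distrr /=; apply: eq_bigr => z' _; lia.
Qed.

Lemma E_SS n (a : 'I_n -> bool) m :
  E a m.+2 = \sum_(q < m.+1) 'C(m - q, q) *
     \sum_v ((~~ type1 a v) * nb a v) * chain (Gv a) q (nb a) v.
Proof.
rewrite E_S.
transitivity (\sum_v ((~~ type1 a v) * nb a v) *
   \sum_(q < m.+1) 'C(m - q, q) * chain (Gv a) q (nb a) v).
  apply: eq_bigr => v _; case Kv: (type1 a v); first by rewrite /= !mul0n.
  by rewrite yclosed ?Kv.
under eq_bigr do rewrite big_distrr /=.
rewrite exchange_big /=; apply: eq_bigr => q _.
rewrite big_distrr /=; apply: eq_bigr => v _; lia.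
Qed.

Definition zs n (a : 'I_n -> bool) : seq 'I_n := [seq i <- enum 'I_n | ~~ type1 a i].

Lemma size_zs n (a : 'I_n -> bool) : size (zs a) = thr_z a.
Proof. by rewrite /thr_z /bseq size_map. Qed.

Lemma zs_zero n (a : 'I_n -> bool) x0 (t : nat) : t < thr_z a -> ~~ type1 a (nth x0 (zs a) t).
Proof.
rewrite -size_zs => ht; have := mem_nth x0 ht.
by rewrite mem_filter => /andP[].
Qed.

Lemma sum_zs n (a : 'I_n -> bool) x0 (phi : 'I_n -> nat) :
  \sum_(t < thr_z a) phi (nth x0 (zs a) t) = \sum_v (~~ type1 a v) * phi v.
Proof.
rewrite -(big_mkord xpredT (fun t => phi (nth x0 (zs a) t))) -size_zs.
rewrite -(big_nth x0 xpredT phi) big_filter big_enum_cond /= big_mkcond /=.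
by apply: eq_bigr => v _; case: (type1 a v) => /=; rewrite ?mul1n.
Qed.

Lemma nb_cnt n (a : 'I_n -> bool) z : ~~ type1 a z ->
  nb a z = #|[set j | type1 a j & val z < val j]|.
Proof.
move=> Zz; rewrite /nb cardsE -sum1_card [RHS]big_mkcond /=; apply: eq_bigr => j _.
rewrite unfold_in /Kn /=; case Kj: (type1 a j) => /=; last by [].
by rewrite tadj_ZK ?Kj //; case: (_ < _).
Qed.

Lemma kt_le n (a : 'I_n -> bool) z z' v : ~~ type1 a z -> ~~ type1 a z' -> val z <= val z' ->
  (Kn a v * tadj a z v * tadj a z' v = Kn a v * tadj a z' v) /\
  (Kn a v * tadj a z' v <= Kn a v * tadj a z v).
Proof.
move=> Zz Zz' h; rewrite /Kn; case Kv: (type1 a v) => //=.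
rewrite !tadj_ZK ?Kv //.
case: (ltnP (val z') (val v)) => h2 /=.
  have -> : val z < val v by apply: leq_ltn_trans h h2.
  by [].
by case: (_ < _).
Qed.

Lemma cn_min n (a : 'I_n -> bool) z z' : ~~ type1 a z -> ~~ type1 a z' ->
  cn a z z' = minn (nb a z) (nb a z').
Proof.
move=> Zz Zz'; rewrite /cn.
under eq_bigr do rewrite (tadjC a _ z').
case: (leqP (val z) (val z')) => h.
  have -> : minn (nb a z) (nb a z') = nb a z'.
    apply/minn_idPr; apply: leq_sum => v _.
    by case: (kt_le v Zz Zz' h).
  by apply: eq_bigr => v _; case: (kt_le v Zz Zz' h).
have h' : val z' <= val z by apply: ltnW.
have -> : minn (nb a z) (nb a z') = nb a z.
  apply/minn_idPl; apply: leq_sum => v _.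
  by case: (kt_le v Zz' Zz h').
apply: eq_bigr => v _; rewrite mulnAC.
by case: (kt_le v Zz' Zz h').
Qed.

Lemma bbE n (a : 'I_n -> bool) x0 (t : nat) : t < thr_z a ->
  nth 0 (Defs.bseq a) t = nb a (nth x0 (zs a) t).
Proof.
move=> ht; rewrite /Defs.bseq (nth_map x0); last by rewrite -/(zs a) size_zs.
by rewrite -/(zs a) nb_cnt //; apply: zs_zero.
Qed.

Lemma chain_tr n (a : 'I_n -> bool) x0 q (t : 'I_(thr_z a)) :
  chain (fun t1 t2 : 'I_(thr_z a) => minn (nth 0 (Defs.bseq a) t1) (nth 0 (Defs.bseq a) t2)) q
        (fun t1 => nth 0 (Defs.bseq a) t1) t
  = chain (Gv a) q (nb a) (nth x0 (zs a) t).
Proof.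
elim: q t => [|q IH] t /=; first by rewrite (bbE x0).
transitivity (\sum_(t' < thr_z a) (fun v => cn a (nth x0 (zs a) t) v * chain (Gv a) q (nb a) v)
                  (nth x0 (zs a) t')).
  apply: eq_bigr => t' _; rewrite IH !(bbE x0) // cn_min //; exact: zs_zero.
rewrite (sum_zs a x0 (fun v => cn a (nth x0 (zs a) t) v * chain (Gv a) q (nb a) v)).
apply: eq_bigr => v _; by rewrite /Gv mulnA.
Qed.

Lemma F_transfer n (a : 'I_n -> bool) (x0 : 'I_n) q :
  thr_F a q.+1 = \sum_v ((~~ type1 a v) * nb a v) * chain (Gv a) q (nb a) v.
Proof.
rewrite /thr_F /=.
rewrite (@chain_sum _ (fun t1 t2 : 'I_(thr_z a) => minn (nth 0 (Defs.bseq a) t1) (nth 0 (Defs.bseq a) t2))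
   (fun t1 => nth 0 (Defs.bseq a) t1) q (fun t1 => nth 0 (Defs.bseq a) t1)).
transitivity (\sum_(t < thr_z a) (fun v => nb a v * chain (Gv a) q (nb a) v) (nth x0 (zs a) t)).
  by apply: eq_bigr => t _; rewrite (chain_tr x0) (bbE x0).
by rewrite (sum_zs a x0 (fun v => nb a v * chain (Gv a) q (nb a) v)); apply: eq_bigr => v _; rewrite mulnA.
Qed.

Lemma LW_E n (a : 'I_n -> bool) L :
  LW a L.+1 = E a L + \sum_(i < L) LW a i.+1 * E a (L - i.+1).
Proof.
rewrite LW_chain.
under [X in _ = _ + X]eq_bigr => i _ do rewrite LW_chain.
rewrite /E.
under eq_bigr do rewrite chainMN mulnDr.
rewrite big_split /=; congr (_ + _).
under eq_bigr do rewrite big_distrr /=.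
rewrite exchange_big /=; apply: eq_bigr => i _.
rewrite big_distrr /=; apply: eq_bigr => u _; lia.
Qed.

Lemma sum_ext B A (S : nat -> nat) : B < A ->
  \sum_(q < B.+1) 'C(B - q, q) * S q = \sum_(q < A) 'C(B - q, q) * S q.
Proof.
move=> hA.
rewrite -!(big_mkord xpredT (fun q => 'C(B - q, q) * S q)).
rewrite (big_cat_nat (leq0n B.+1) hA) /= [X in _ = _ + X]big_nat_cond [X in _ = _ + X]big1 ?addn0 //.
move=> q /andP[/andP[hq _] _].
have -> : B - q = 0 by lia.
rewrite bin0n; have -> : (q == 0) = false by apply/eqP; lia.
by [].
Qed.

Lemma E_SSF n (a : 'I_n -> bool) (x0 : 'I_n) m :
  E a m.+2 = \sum_(q < m.+1) 'C(m - q, q) * thr_F a q.+1.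
Proof. by rewrite E_SS; apply: eq_bigr => q _; rewrite (F_transfer a x0). Qed.

Unset Implicit Arguments.

Theorem proposition3p5 (n : nat) (a : 'I_n -> bool) :
  (4 <= n)%N ->
  tconnected a ->
  (n - 1 < thr_size a)%N ->
  (thr_size a < 'C(n, 2))%N ->
  LW a 0 = 1 /\
  forall k : nat, (0 < k)%N ->
    LW a k = (thr_c a * LW a (k - 1) +
      \sum_(r < k - 2) LW a r *
        \sum_(q < k) 'C(k - 3 - r - q, q) * thr_F a q.+1)%N.
Proof.
move=> hn _ _ _; split => // k.
have x0 : 'I_n by exists 0; lia.
case: k => [//|[|[|m]]] _.
- by rewrite LW_E big_ord0 E_0 big_ord0 /= muln1 addn0.
- by rewrite LW_E big_ord1 E_1 E_0 big_ord0 /= addn0 mulnC.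
have -> : m.+3 - 2 = m.+1 by lia.
have -> : m.+3 - 3 = m by lia.
have -> : m.+3 - 1 = m.+2 by lia.
rewrite LW_E [in RHS]big_ord_recl (_ : LW a 0 = 1) // mul1n.
rewrite [in LHS]big_ord_recr [in LHS]big_ord_recr.
have e1 : forall i : 'I_m, E a (m.+2 - i.+1) =
   \sum_(q < (m - i.+1).+1) 'C(m - i.+1 - q, q) * thr_F a q.+1.
  move=> i; have -> : m.+2 - i.+1 = (m - i.+1).+2 by have := ltn_ord i; lia.
  exact: E_SSF.
rewrite (E_SSF a x0).
move: e1; move: (LW a) (thr_F a) => f F e1 /=.
have -> : m.+2 - m.+1 = 1 by lia.
rewrite subnn E_1 E_0 muln0 addn0 subn0.
rewrite (@sum_ext m m.+3 (fun q => F q.+1)); last by lia.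
rewrite [f m.+2 * _]mulnC.
suff -> : \sum_(i < m) f i.+1 * E a (m.+2 - i.+1) = \sum_(i < m) f (bump 0 i) *
   \sum_(q < m.+3) 'C(m - bump 0 i - q, q) * F q.+1 by rewrite addnA addnC.
apply: eq_bigr => i _; rewrite e1 /bump /= add1n.
rewrite (@sum_ext (m - i.+1) m.+3 (fun q => F q.+1)) //.
lia.
Qed.
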